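(* Let $A$ and $B$ be two $m\times m$ coloring matrices. If $A$ and $B$ are tree coloring equivalent, then the sum of all entries of $A^TA+A^2$ equals the sum of all entries of $B^TB+B^2$.
   Context: A plane tree is an unlabeled rooted tree in which the children of every vertex are linearly ordered. A coloring matrix is an $m\times m$ matrix $A=(a_{ij})$ with entries in $\{0,1\}$. An $A$-coloring of a plane tree assigns to each vertex a color in $\{1,\dots,m\}$ such that whenever a vertex of color $j$ is a child of a vertex of color $i$, $a_{ij}=1$. Let $t_A(n)$ be the number of pairs (plane tree with $n$ vertices, $A$-coloring of it). Two $m\times m$ coloring matrices $A,B$ are tree coloring equivalent if $t_A(n)=t_B(n)$ for all $n\ge1$. *)

(* Defs.v *)
From mathcomp Require Import all_boot all_algebra.
From Stdlib Require Import List.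
Set Implicit Arguments. Unset Strict Implicit. Unset Printing Implicit Defensive.
Import GRing.Theory.
Local Open Scope ring_scope.

Definition coloring_matrix (m : nat) (A : 'M[int]_m) : Prop :=
  forall i j, A i j = 0 \/ A i j = 1.

(* A plane tree together with a coloring of its vertices by colors 'I_m:
   a rooted tree whose children are ordered (a list), each vertex carrying
   a color. *)
Inductive ctree (m : nat) : Type :=
  CNode : 'I_m -> list (ctree m) -> ctree m.

Definition root_color m (t : ctree m) : 'I_m := let: CNode c _ := t in c.

Fixpoint nverts m (t : ctree m) : nat :=
  let: CNode _ cs := t in
  (1 + (fix go (l : list (ctree m)) : nat :=
          match l with nil => 0 | cons c l' => nverts c + go l' end) cs)%N.

Fixpoint is_A_coloring m (A : 'M[int]_m) (t : ctree m) : bool :=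
  let: CNode i cs := t in
  (fix go (l : list (ctree m)) : bool :=
     match l with
     | nil => true
     | cons c l' => (A i (root_color c) == 1) && is_A_coloring A c && go l'
     end) cs.

Definition has_card (T : Type) (P : T -> Prop) (k : nat) : Prop :=
  exists l : list T, NoDup l /\ (forall x, In x l <-> P x) /\ length l = k.

Definition tA_is m (A : 'M[int]_m) (n k : nat) : Prop :=
  has_card (fun t : ctree m => nverts t = n /\ is_A_coloring A t) k.

Definition tree_coloring_equivalent m (A B : 'M[int]_m) : Prop :=
  forall n k, (1 <= n)%N -> (tA_is A n k <-> tA_is B n k).

Definition entry_sum m (M : 'M[int]_m) : int := \sum_(i < m) \sum_(j < m) M i j.

(* Main.v *)
Require Import Defs.
From mathcomp Require Import all_boot all_algebra.
From Stdlib Require List Lia.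
From mathcomp Require Import zify.
Import List.ListNotations.
Local Open Scope ring_scope.
Import GRing.Theory.

Lemma has_card_unique (T : Type) (P : T -> Prop) k1 k2 :
  has_card P k1 -> has_card P k2 -> k1 = k2.
Proof.
move=> [l1 [N1 [H1 <-]]] [l2 [N2 [H2 <-]]].
apply/eqP; rewrite eqn_leq; apply/andP; split; apply/leP; apply: List.NoDup_incl_length => //.
- by move=> x /H1 /H2.
- by move=> x /H2 /H1.
Qed.

Arguments has_card_unique {T P k1 k2}.

Lemma uniq_NoDup (T : eqType) (s : seq T) : uniq s -> List.NoDup s.
Proof.
elim: s => [|x s IH] /=; first by constructor.
move=> /andP [xs us]; constructor; last exact: IH.
move=> Hin; move/negP: xs; apply.
elim: s Hin {us IH} => [|y s IH] //= [->|H]; rewrite in_cons ?eqxx //.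
by rewrite IH ?orbT.
Qed.

Lemma mem_In (T : eqType) (s : seq T) x : x \in s -> List.In x s.
Proof.
elim: s => [|y s IH] //=; rewrite in_cons => /orP [/eqP ->|H]; [by left|right; exact: IH].
Qed.

Lemma NoDup_map_inj (A B : Type) (f : A -> B) (l : list A) :
  (forall x y, f x = f y -> x = y) -> List.NoDup l -> List.NoDup (List.map f l).
Proof.
move=> inj; elim=> [|x l0 nx nd IH] /=; constructor => //.
move=> /List.in_map_iff [y [/inj -> H]]; exact: nx.
Qed.

Lemma filter_eq (T : Type) (p : pred T) (s : seq T) : List.filter p s = seq.filter p s.
Proof. by elim: s => //= x s ->. Qed.

Lemma count_int (T : Type) (p : pred T) (s : seq T) :
  Posz (count p s) = \sum_(x <- s) ((p x : nat)%:R : int).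
Proof.
elim: s => [|x s IH]; first by rewrite big_nil.
by rewrite big_cons /= PoszD IH natz.
Qed.

Lemma length_size (T : Type) (s : seq T) : List.length s = size s.
Proof. by elim: s => //= x s ->. Qed.

Section S.
Variable m : nat.
Definition T3 := ('I_m * 'I_m * 'I_m)%type.
Definition TT := (T3 + T3)%type.
Definition f3 (x : TT) : ctree m :=
  match x with
  | inl (i, j, k) => CNode i [:: CNode j [:: CNode k [::]]]
  | inr (i, j, k) => CNode i [:: CNode j [::]; CNode k [::]]
  end.

Lemma f3_inj x y : f3 x = f3 y -> x = y.
Proof.
by case: x => [[[i j] k]|[[i j] k]]; case: y => [[[i' j'] k']|[[i' j'] k']] //= [-> -> ->].
Qed.

Lemma nverts_ge1 (t : ctree m) : (1 <= nverts t)%N.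
Proof. by case: t. Qed.

Lemma nverts1 (t : ctree m) : nverts t = 1%N -> t = CNode (root_color t) [::].
Proof.
case: t => c [|c1 cs] //= H; exfalso; have := nverts_ge1 c1; move: H.
lia.
Qed.

Lemma nverts3 (t : ctree m) : nverts t = 3%N -> exists x, t = f3 x.
Proof.
case: t => i [|c1 [|c2 [|c3 cs]]] //=.
- case: c1 => j [|d1 [|d2 ds]] //=.
  + move=> H; have E : nverts d1 = 1%N by lia.
    by exists (inl (i, j, root_color d1)); rewrite /= (nverts1 _ E).
  + have := nverts_ge1 d1; have := nverts_ge1 d2.
    lia.
- move=> H; have E1 : nverts c1 = 1%N by have := nverts_ge1 c2; have := nverts_ge1 c1; lia.
  have E2 : nverts c2 = 1%N by have := nverts_ge1 c2; have := nverts_ge1 c1; lia.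
  by exists (inr (i, root_color c1, root_color c2)); rewrite /= (nverts1 _ E1) (nverts1 _ E2).
- have := nverts_ge1 c1; have := nverts_ge1 c2; have := nverts_ge1 c3.
  lia.
Qed.

Lemma nverts_f3 x : nverts (f3 x) = 3%N.
Proof. by case: x => [[[i j] k]|[[i j] k]]. Qed.
End S.
Arguments f3 {m}.
Arguments f3_inj {m}.
Arguments nverts3 {m}.
Arguments nverts_f3 {m}.

Lemma sum3 m (G : T3 m -> int) :
  \sum_(x : T3 m) G x = \sum_i \sum_j \sum_k G (i, j, k).
Proof. by rewrite pair_bigA pair_bigA; apply: eq_bigr => [[[i j] k]] _. Qed.

Lemma tA3 m (A : 'M[int]_m) : coloring_matrix A ->
  exists k : nat, tA_is A 3 k /\ Posz k = entry_sum (A^T *m A + A *m A).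
Proof.
move=> cA.
pose p := fun x : TT m => is_A_coloring A (f3 x).
exists (count p (index_enum (TT m))); split.
  exists (List.map (@f3 m) (List.filter p (index_enum (TT m)))); split; [|split].
  - apply: NoDup_map_inj; first exact: f3_inj.
    rewrite filter_eq; apply: uniq_NoDup; rewrite filter_uniq //; exact: index_enum_uniq.
  - move=> t; rewrite List.in_map_iff; split.
      move=> [x [<- /List.filter_In [_ px]]]; split => //; exact: nverts_f3.
    move=> [/nverts3 [x ->] px]; exists x; split => //; apply/List.filter_In; split => //.
    by apply: mem_In; rewrite mem_index_enum.
  - by rewrite List.length_map filter_eq length_size size_filter.
rewrite count_int big_sumType /= !sum3.
have E1 i j k : ((p (inl (i, j, k)))%:R : int) = A i j * A j k.
  by rewrite /p /=; case: (cA i j) => ->; case: (cA j k) => ->.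
have E2 i j k : ((p (inr (i, j, k)))%:R : int) = A i j * A i k.
  by rewrite /p /=; case: (cA i j) => ->; case: (cA i k) => ->.
under eq_bigr do under eq_bigr do under eq_bigr do rewrite E1.
under [X in _ + X = _]eq_bigr do under eq_bigr do under eq_bigr do rewrite E2.
rewrite /entry_sum.
under [X in _ = X]eq_bigr do under eq_bigr do rewrite !mxE.
under [X in _ = X]eq_bigr do under eq_bigr do under eq_bigr do rewrite mxE.
under [X in _ = X]eq_bigr do rewrite big_split /=.
rewrite [X in _ = X]big_split /= addrC.
congr (_ + _).
  by apply: eq_bigr => i _; exact: exchange_big.
under [X in _ = X]eq_bigr do rewrite exchange_big.
by rewrite [RHS]exchange_big.
Qed.

Theorem theorem11 (m : nat) (A B : 'M[int]_m) :
  coloring_matrix A -> coloring_matrix B ->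
  tree_coloring_equivalent A B ->
  entry_sum (A^T *m A + A *m A) = entry_sum (B^T *m B + B *m B).
Proof.
move=> cA cB eq.
have [kA [HA EA]] := @tA3 _ _ cA; have [kB [HB EB]] := @tA3 _ _ cB.
rewrite -EA -EB; congr Posz; symmetry; apply: (has_card_unique HB).
exact: (proj1 (eq 3%N kA isT)).
Qed.
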